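(* Let $G$ be a connected (finite, simple) graph, $\mathcal{F}$ a maximum induced forest of $G$, $S=V(G)\setminus V(\mathcal{F})$, $H$ the contracted graph, and $B$ a skeleton of $H$ with the maximum possible number of 2-edges among all skeletons (all as defined in the context). Let $L_S$ be the set of vertices of $S$ that are leaves of $B$ and $B_1=B[V(B)\setminus L_S]$. Then for each 1-edge $\overrightarrow{uv}$ of $B_1$ (directed from $u$ to its parent $v$), either $u$ is a tree vertex, or some child $u'$ of $u$ in $B_1$ is a tree vertex and $u'u$ is a 2-edge.
   Context: A maximum induced forest of $G$ is an induced forest of $G$ with the maximum number of vertices. Let $\mathcal{T}$ be the set of connected components (trees) of $\mathcal{F}$ and $S=V(G)\setminus V(\mathcal{F})$. The graph $H$ has vertex set $\{x_T : T\in\mathcal{T}\}\cup S$ (the $x_T$ are called tree vertices, the vertices of $S$ non-tree vertices) and edge set consisting of all edges of $G[S]$ together with all pairs $ux_T$ with $u\in S$, $T\in\mathcal{T}$ such that $u$ has at least one neighbor in $V(T)$ in $G$. An edge $ux_T$ of $H$ is a 2-edge if $u$ has at least two neighbors in $V(T)$ in $G$; all other edges of $H$ (including all edges with both endpoints in $S$) are 1-edges. A skeleton is a spanning tree of $H$ rooted at some tree vertex, with all edges directed towards the root (an in-arborescence). The parent of a non-root vertex is its unique out-neighbor; its children are its in-neighbors. *)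

(* Defs.v *)
From mathcomp Require Import all_boot.
Set Implicit Arguments. Unset Strict Implicit. Unset Printing Implicit Defensive.

Definition simple_graph (T : finType) (e : rel T) : Prop :=
  symmetric e /\ irreflexive e.

Definition connected_graph (T : finType) (e : rel T) : Prop :=
  forall x y : T, connect e x y.

Definition induced_forest (T : finType) (e : rel T) (F : {set T}) : Prop :=
  forall s : seq T, uniq s -> 3 <= size s -> {subset s <= F} -> ~~ cycle e s.

Definition max_induced_forest (T : finType) (e : rel T) (F : {set T}) : Prop :=
  induced_forest e F /\
  forall F' : {set T}, induced_forest e F' -> #|F'| <= #|F|.

Definition restr_rel (T : finType) (e : rel T) (F : {set T}) : rel T :=
  fun x y => [&& x \in F, y \in F & e x y].

Definition forest_comps (T : finType) (e : rel T) (F : {set T}) : {set {set T}} :=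
  [set [set y in F | connect (restr_rel e F) x y] | x in F].

(* Vertices of the contracted graph H: inl u for u in S = V(G) \ F
   (non-tree vertices), inr C for a component C of G[F] (tree vertex x_C). *)
Notation HVert T := (T + {set T})%type.

Definition HV (T : finType) (e : rel T) (F : {set T}) : {set HVert T} :=
  [set x : HVert T | match x with
                     | inl u => u \notin F
                     | inr C => C \in forest_comps e F
                     end].

Definition is_tree_vertex (T : finType) (x : HVert T) : bool :=
  if x is inr _ then true else false.

Definition nbrs_in (T : finType) (e : rel T) (u : T) (C : {set T}) : nat :=
  #|[set w in C | e u w]|.

Definition Hadj (T : finType) (e : rel T) (F : {set T}) : rel (HVert T) :=
  fun a b =>
    match a, b with
    | inl u, inl v => [&& u \notin F, v \notin F & e u v]
    | inl u, inr C | inr C, inl u =>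
        [&& u \notin F, C \in forest_comps e F & 0 < nbrs_in e u C]
    | inr _, inr _ => false
    end.

Definition two_edge (T : finType) (e : rel T) (F : {set T}) : rel (HVert T) :=
  fun a b =>
    match a, b with
    | inl u, inr C | inr C, inl u =>
        [&& u \notin F, C \in forest_comps e F & 1 < nbrs_in e u C]
    | _, _ => false
    end.

(* A skeleton: spanning in-arborescence of H with root r (a tree vertex),
   given by its parent map p (only relevant on V(H) \ {r}): every non-root
   vertex x has its parent p x in V(H), x p(x) is an edge of H, and iterating
   the parent map from x reaches the root. *)
Definition skeleton (T : finType) (e : rel T) (F : {set T})
    (r : HVert T) (p : HVert T -> HVert T) : Prop :=
  [/\ r \in HV e F, is_tree_vertex r &
      forall x, x \in HV e F -> x != r ->
        [/\ p x \in HV e F, Hadj e F x (p x) & exists n, iter n p x = r]].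

Definition children (T : finType) (e : rel T) (F : {set T})
    (r : HVert T) (p : HVert T -> HVert T) (x : HVert T) : {set HVert T} :=
  [set y in HV e F | (y != r) && (p y == x)].

Definition num_two_edges (T : finType) (e : rel T) (F : {set T})
    (r : HVert T) (p : HVert T -> HVert T) : nat :=
  #|[set x in HV e F | (x != r) && two_edge e F x (p x)]|.

Definition max_skeleton (T : finType) (e : rel T) (F : {set T})
    (r : HVert T) (p : HVert T -> HVert T) : Prop :=
  skeleton e F r p /\
  forall r' p', skeleton e F r' p' -> num_two_edges e F r' p' <= num_two_edges e F r p.

Definition skel_deg (T : finType) (e : rel T) (F : {set T})
    (r : HVert T) (p : HVert T -> HVert T) (x : HVert T) : nat :=
  #|children e F r p x| + (x != r).

Definition LS (T : finType) (e : rel T) (F : {set T})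
    (r : HVert T) (p : HVert T -> HVert T) : {set HVert T} :=
  [set x in HV e F | ~~ is_tree_vertex x & skel_deg e F r p x == 1].

(* Main.v *)
Require Import Defs.
From mathcomp Require Import all_boot.
From mathcomp Require Import zify.
From Stdlib Require Import ClassicalEpsilon Classical.
Set Implicit Arguments. Unset Strict Implicit. Unset Printing Implicit Defensive.

Lemma path_restr (T : finType) (e : rel T) (F : {set T}) (s : seq T) y :
  y \in F -> {subset s <= F} -> path e y s -> path (restr_rel e F) y s.
Proof.
elim: s y => //= z s IH y yF sF /andP [eyz ps].
have zF : z \in F by apply: sF; rewrite mem_head.
rewrite /restr_rel yF zF eyz /=; apply: IH => // v vs; apply: sF.
by rewrite inE vs orbT.
Qed.

Lemma two_nbr (T : finType) (e : rel T) (F : {set T}) x :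
  symmetric e -> max_induced_forest e F -> x \notin F ->
  exists C, C \in forest_comps e F /\ 1 < nbrs_in e x C.
Proof.
move=> esym [Ff Fmax] xF.
have H : ~ induced_forest e (x |: F).
  by move=> H; have := Fmax _ H; rewrite cardsU1 xF; lia.
apply: NNPP => Hn; apply: H => s us ss sub; apply/negP => cyc; apply: Hn.
have xs : x \in s.
  apply: contraT => xs; suff: {subset s <= F} by move/(Ff s us ss); rewrite cyc.
  move=> y ys.
  have := sub y ys; rewrite !inE => /orP [/eqP yx|//].
  by move: xs; rewrite -yx ys.
case/splitPr: xs us ss sub cyc => s1 s2 us ss sub cyc.
set q := s2 ++ s1.
have uq : uniq (x :: q) by rewrite -(rot_uniq (size s1)) rot_size_cat in us.
have cq : cycle e (x :: q) by rewrite -(rot_cycle (size s1)) rot_size_cat in cyc.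
have sq : 2 <= size q by move: ss; rewrite /q !size_cat /=; lia.
have subq : {subset q <= F}.
  move=> y yq; have : y \in s1 ++ x :: s2.
    by rewrite mem_cat inE; move: yq; rewrite mem_cat => /orP [->|->]; rewrite ?orbT.
  move/sub; rewrite !inE => /orP [/eqP yx|//].
  by move: uq; rewrite /= -yx yq.
move: uq cq sq subq; case: q => [|a1 [|b q'']] //= uq cq _ subq.
have cq' : path e x (a1 :: rcons (b :: q'') x) := cq.
move: cq' => /andP [exa].
move=> pp; have : path e a1 (rcons (b :: q'') x) := pp.
rewrite rcons_path => /andP [pa eak]; clear pp.
set ak := last b q'' in eak.
have akin : ak \in b :: q'' by apply: mem_last.
have a1F : a1 \in F by apply: subq; rewrite mem_head.
have conn : connect (restr_rel e F) a1 ak.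
  apply: (path_connect (path_restr a1F _ pa)).
    by move=> v vs; apply: subq; rewrite inE vs orbT.
  by rewrite inE akin orbT.
have akF : ak \in F by apply: subq; rewrite inE akin orbT.
exists [set y in F | connect (restr_rel e F) a1 y]; split.
  by apply/imsetP; exists a1.
have na : a1 != ak.
  by apply: contraTneq uq => ->; rewrite /= inE akin /= andbF.
have : #|[set a1; ak]| <= nbrs_in e x [set y in F | connect (restr_rel e F) a1 y].
  apply: subset_leq_card; apply/subsetP => v; rewrite !inE => /orP [] /eqP ->.
    by rewrite a1F connect0 exa.
  by rewrite akF conn esym eak.
by rewrite cards2 na.
Qed.
Ltac slia := repeat match goal with
 | H : is_true (leq _ _) |- _ => revert H
 | H : @eq nat _ _ |- _ => revert H
 end; repeat match goal with H : _ |- _ => clear H end; lia.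

Section Skel.
Variables (T : finType) (e : rel T) (F : {set T}) (r : HVert T) (p : HVert T -> HVert T).
Hypothesis esym : symmetric e.
Hypothesis sk : skeleton e F r p.

Local Notation V := (HV e F).

Lemma Hadj_sym x y : Hadj e F x y = Hadj e F y x.
Proof. by case: x => [x|X]; case: y => [y|Y] //=; rewrite esym andbCA. Qed.

Lemma two_edge_sym x y : two_edge e F x y = two_edge e F y x.
Proof. by case: x => [x|X]; case: y => [y|Y]. Qed.

Definition dep (y : HVert T) : nat :=
  match excluded_middle_informative (exists n, iter n p y == r) with
  | left H => ex_minn H | right _ => 0 end.

Lemma depP y : (exists n, iter n p y = r) ->
  iter (dep y) p y = r /\ (forall m, iter m p y = r -> dep y <= m).
Proof.
move=> [n Hn]; rewrite /dep; case: excluded_middle_informative => [H|H]; last first.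
  by exfalso; apply: H; exists n; apply/eqP.
case: ex_minnP => m /eqP Hm Hmin; split=> // m' Hm'; apply: Hmin; exact/eqP.
Qed.

Lemma reachV y : y \in V -> exists n, iter n p y = r.
Proof.
case: sk => rV _ H yV; case: (eqVneq y r) => [->|ynr]; first by exists 0.
by case: (H y yV ynr).
Qed.

Lemma dep_iter y : y \in V -> iter (dep y) p y = r.
Proof. by move/reachV/depP => []. Qed.

Lemma dep_min y m : y \in V -> iter m p y = r -> dep y <= m.
Proof. by move/reachV/depP => [_]; apply. Qed.

Lemma dep_r : dep r = 0.
Proof. case: sk => rV _ _; have := @dep_min r 0 rV erefl; slia. Qed.

Lemma dep_p y : y \in V -> y != r -> p y \in V /\ dep y = (dep (p y)).+1.
Proof.
move=> yV ynr; case: sk => _ _ H; case: (H y yV ynr) => pyV _ _; split=> //.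
have h1 : iter (dep (p y)).+1 p y = r by rewrite iterSr dep_iter.
have h2 : 0 < dep y.
  rewrite lt0n; apply/negP => /eqP h0.
  by have := dep_iter yV; rewrite h0 /= => E; rewrite E eqxx in ynr.
have h3 : iter (dep y).-1 p (p y) = r by rewrite -iterSr prednK // dep_iter.
have := dep_min yV h1; have := dep_min pyV h3; slia.
Qed.

Lemma dep_pos_neq y : 0 < dep y -> y != r.
Proof. by move=> h; apply: contraTneq h => ->; rewrite dep_r. Qed.

Lemma iterV y i : y \in V -> i <= dep y ->
  iter i p y \in V /\ dep (iter i p y) = dep y - i.
Proof.
move=> yV; elim: i => [|i IH] Hi; first by rewrite subn0.
case: IH; first slia.
move=> zV dz.
have znr : iter i p y != r by apply: dep_pos_neq; slia.
case: (dep_p zV znr) => pzV dpz; rewrite /=; split=> //; slia.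
Qed.

Section Exch.
Variables (a t w : HVert T) (k : nat).
Hypotheses (aV : a \in V) (anr : a != r) (tV : t \in V) (tk : iter k p t = a)
  (dta : dep t = dep a + k) (wV : w \in V) (Htw : Hadj e F t w).
Definition desc y := (dep a <= dep y) && (iter (dep y - dep a) p y == a).
Hypothesis wnd : ~~ desc w.

Lemma depa_pos : 0 < dep a.
Proof. by case: (dep_p aV anr) => _ ->. Qed.

Lemma Pfacts i : i <= k -> iter i p t \in V /\ dep (iter i p t) = dep t - i.
Proof. move=> ik; apply: iterV => //; slia. Qed.

Definition onP x := [exists i : 'I_k.+1, iter i p t == x].

Lemma onP_iter i : i <= k -> onP (iter i p t).
Proof. by move=> ik; apply/existsP; exists (@Ordinal k.+1 i ik). Qed.

Lemma onPE x : onP x -> exists2 i, i <= k & x = iter i p t.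
Proof. by case/existsP => [[i Hi] /eqP <-]; exists i. Qed.

Lemma onP_dep x : onP x ->
  [/\ x \in V, dep a <= dep x, dep x <= dep t & x = iter (dep t - dep x) p t].
Proof.
case/onPE => i ik ->; have [V1 d1] := Pfacts ik; rewrite d1; split => //; try slia.
by have -> : dep t - (dep t - i) = i by slia.
Qed.

Lemma onP_desc x : onP x -> desc x.
Proof.
case/onPE => i ik ->; have [V1 d1] := Pfacts ik; rewrite /desc d1.
apply/andP; split; first slia.
have -> : dep t - i - dep a = k - i by slia.
by rewrite -iterD subnK // tk.
Qed.

Lemma t_onP : onP t.
Proof. exact: (onP_iter (leq0n k)). Qed.

Lemma a_onP : onP a.
Proof. by rewrite -tk; apply: onP_iter. Qed.

Lemma onP_p x : onP x -> x != a -> onP (p x).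
Proof.
case/onPE => i ik -> xna.
have ik' : i < k by rewrite ltn_neqAle ik andbT; apply: contraNneq xna => ->; rewrite tk.
exact: (onP_iter ik').
Qed.

Definition pp x := if x == t then w else if onP x then iter (dep t - dep x).-1 p t else p x.

Lemma ppE x : x != t -> ~~ onP x -> pp x = p x.
Proof. by rewrite /pp => /negbTE -> /negbTE ->. Qed.

Lemma reach_succ y : (exists n, iter n pp (pp y) = r) -> exists n, iter n pp y = r.
Proof. by move=> [n h]; exists n.+1; rewrite iterSr. Qed.

Lemma reachA n y : dep y < n -> y \in V -> ~~ desc y -> exists m, iter m pp y = r.
Proof.
elim: n y => [|n IH] y Hd yV nd //.
case: (eqVneq y r) => [->|ynr]; first by exists 0.
have ynP : ~~ onP y by apply: contra nd; apply: onP_desc.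
have ynt : y != t by apply: contraNneq ynP => ->; apply: t_onP.
apply: reach_succ; rewrite ppE //.
case: (dep_p yV ynr) => pyV dy.
apply: IH => //; first slia.
apply: contra nd => /andP [h1 /eqP h2]; apply/andP; split; first slia.
have -> : dep y - dep a = (dep (p y) - dep a).+1 by slia.
by rewrite iterSr h2.
Qed.

Lemma reachB j : j <= k -> exists m, iter m pp (iter j p t) = r.
Proof.
elim: j => [|j IH] jk.
  apply: reach_succ; rewrite /= /pp eqxx.
  exact: (reachA (ltnSn _) wV wnd).
have [yV dy] := Pfacts jk.
have ynt : iter j.+1 p t != t.
  apply/eqP => E; move: dy; rewrite E; have := depa_pos; slia.
apply: reach_succ; rewrite /pp (negbTE ynt) onP_iter // dy.
have -> : (dep t - (dep t - j.+1)).-1 = j by have := depa_pos; slia.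
apply: IH; slia.
Qed.

Lemma reachC n y : dep y < n -> y \in V -> desc y -> exists m, iter m pp y = r.
Proof.
elim: n y => [|n IH] y Hd yV dsc //.
case: (boolP (onP y)) => yP.
  have [_ h1 h2 ->] := onP_dep yP; apply: reachB; slia.
have yna : y != a by apply: contraNneq yP => ->; exact: a_onP.
move: dsc => /andP [h1 /eqP h2].
have hgt : dep a < dep y.
  rewrite ltn_neqAle h1 andbT; apply: contraNneq yna => E.
  by move: h2; rewrite E subnn => /= ->.
have ynr : y != r by apply: dep_pos_neq; have := depa_pos; slia.
have ynt : y != t by apply: contraNneq yP => ->; exact: t_onP.
apply: reach_succ; rewrite ppE //.
case: (dep_p yV ynr) => pyV dy.
apply: IH => //; first slia.
apply/andP; split; first slia.
have E : dep y - dep a = (dep (p y) - dep a).+1 by slia.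
by rewrite -iterSr -E h2.
Qed.

Lemma reach_all y : y \in V -> exists m, iter m pp y = r.
Proof.
move=> yV; case: (boolP (desc y)) => d.
  exact: (reachC (ltnSn _) yV d).
exact: (reachA (ltnSn _) yV d).
Qed.

Lemma pp_skel : skeleton e F r pp.
Proof.
have sk' := sk; case: sk' => rV rtv H; split => // y yV ynr.
have [ppyV ppH] : pp y \in V /\ Hadj e F y (pp y).
  rewrite /pp; case: (eqVneq y t) => [->|ynt]; first by split.
  case: ifP => yP; last by case: (H y yV ynr).
  case/onPE: yP => i ik ye; subst y.
  have [_ di] := Pfacts ik; rewrite di.
  have -> : dep t - (dep t - i) = i by slia.
  case: i ik di ynt yV ynr => [|i] ik di ynt yV ynr; first by rewrite eqxx in ynt.
  have [zV dz] := Pfacts (ltnW ik).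
  have znr : iter i p t != r by apply: dep_pos_neq; have := depa_pos; slia.
  have [_ Hz _] := H _ zV znr.
  by rewrite /= Hadj_sym.
split => //; exact: reach_all.
Qed.

Lemma pp_count : two_edge e F t w -> ~~ two_edge e F a (p a) ->
  num_two_edges e F r p < num_two_edges e F r pp.
Proof.
move=> tw na; rewrite /num_two_edges.
set S := [set x in V | (x != r) && two_edge e F x (p x)].
set S2 := [set x in V | (x != r) && two_edge e F x (pp x)].
pose f x := if onP x && (x != a) then p x else x.
have tnr : t != r by apply: dep_pos_neq; have := depa_pos; slia.
have tS2 : t \in S2 by apply/setIdP; rewrite tV /pp eqxx tw tnr.
have Sna : forall x, x \in S -> x != a.
  move=> x /setIdP [_ /andP [_ tx]].
  by apply: contraTneq tx => ->.
have fS : {in S, forall x, f x \in S2 :\ t}.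
  move=> x xS; have xna := Sna x xS; move: xS.
  move=> /setIdP [xV /andP [xnr tx]]; rewrite /f xna andbT.
  case: ifP => xP.
    case/onPE: xP xna xV xnr tx => i ik -> xna xV xnr tx.
    have ik' : i < k by rewrite ltn_neqAle ik andbT; apply: contraNneq xna => ->; rewrite tk.
    have [yV dy] := Pfacts ik'.
    have ynt : iter i.+1 p t != t.
      apply/eqP => E; move: dy; rewrite E; have := depa_pos; slia.
    have ynr : iter i.+1 p t != r by apply: dep_pos_neq; have := depa_pos; slia.
    rewrite in_setD1 -[p (iter i p t)]/(iter i.+1 p t) ynt; apply/setIdP; rewrite yV ynr /=.
    rewrite -[p (iter i p t)]/(iter i.+1 p t) /pp (negbTE ynt) onP_iter // dy.
    have -> : (dep t - (dep t - i.+1)).-1 = i by have := depa_pos; slia.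
    by rewrite two_edge_sym.
  have xnt : x != t by apply: contraFneq xP => ->; exact: t_onP.
  rewrite in_setD1 xnt; apply/setIdP; by rewrite xV xnr ppE // xP.
have finj : {in S &, injective f}.
  move=> x y xS yS; have xna := Sna x xS; have yna := Sna y yS.
  move: xS yS => /setIdP [xV /andP [xnr _]] /setIdP [yV /andP [ynr _]].
  rewrite /f xna yna !andbT.
  case: ifP => xP; case: ifP => yP // E.
  - have [_ dx] := dep_p xV xnr; have [_ dy] := dep_p yV ynr.
    have [_ _ _ ex] := onP_dep xP; have [_ _ _ ey] := onP_dep yP.
    by rewrite ex ey dx dy E.
  - by have := onP_p xP xna; rewrite E yP.
  - by have := onP_p yP yna; rewrite -E xP.
rewrite -(card_in_imset finj).
apply: (@leq_ltn_trans #|S2 :\ t|).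
  apply: subset_leq_card; apply/subsetP => _ /imsetP [x xS ->]; exact: fS.
by rewrite (cardsD1 t S2) tS2.
Qed.

End Exch.
End Skel.

Lemma exch_contra (T : finType) (e : rel T) (F : {set T}) (r : HVert T)
  (p : HVert T -> HVert T) (esym : symmetric e) (msk : max_skeleton e F r p)
  a t w k :
  a \in HV e F -> a != r -> t \in HV e F -> iter k p t = a ->
  dep r p t = dep r p a + k -> w \in HV e F -> Hadj e F t w ->
  ~~ desc r p a w -> two_edge e F t w -> ~~ two_edge e F a (p a) -> False.
Proof.
move=> aV anr tV tk dta wV Htw wnd tw na.
have sk := msk.1.
have h1 := pp_count sk aV anr tV tk dta tw na.
have h2 := msk.2 _ _ (pp_skel esym sk aV anr tV tk dta wV Htw wnd).
by have := leq_ltn_trans h2 h1; rewrite ltnn.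
Qed.

Theorem corollary4 (T : finType) (e : rel T) (F : {set T})
    (r : HVert T) (p : HVert T -> HVert T) :
  simple_graph e -> connected_graph e -> max_induced_forest e F ->
  max_skeleton e F r p ->
  forall u : HVert T,
    u \in HV e F -> u != r ->
    u \notin LS e F r p -> p u \notin LS e F r p ->
    ~~ two_edge e F u (p u) ->
    is_tree_vertex u \/
    exists u' : HVert T,
      [/\ u' \in children e F r p u, u' \notin LS e F r p,
          is_tree_vertex u' & two_edge e F u' u].
Proof.
move=> [esym _] _ Fmax msk u uV unr _ _ n2.
have sk := msk.1.
case: u uV unr n2 => [x|C0] uV unr n2; last by left.
right.
have xF : x \notin F by move: uV; rewrite inE.
have [C [CF h]] := two_nbr esym Fmax xF.
have tV : (inr C : HVert T) \in HV e F by rewrite inE.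
have tw : two_edge e F (inl x) (inr C) by rewrite /= xF CF h.
have Hut : Hadj e F (inl x) (inr C) by rewrite /= xF CF ltnW.
case: (boolP (desc r p (inl x) (inr C))) => d; last first.
  exfalso; apply: (exch_contra esym msk uV unr uV (k := 0) erefl _ tV Hut d tw n2).
  by rewrite addn0.
move/andP: d => [h1 /eqP h2].
move: h2; case ek: (dep r p (inr C) - dep r p (inl x)) => [|k] h2 //.
have kd : k <= dep r p (inr C) by move: ek; lia.
have [cV dc] := iterV sk tV kd.
have pc : p (iter k p (inr C)) = inl x by [].
have cnr : iter k p (inr C) != r by apply: (dep_pos_neq sk); rewrite dc; lia.
case: (boolP (two_edge e F (iter k p (inr C)) (inl x))) => tc.
  have [D cD] : exists D, iter k p (inr C) = inr D.
    by move: tc; case: (iter k p (inr C)) => [y|D] //; exists D.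
  exists (iter k p (inr C)); split.
  - by apply/setIdP; rewrite cV cnr pc eqxx.
  - by rewrite cD; apply/negP => /setIdP [_ /andP []].
  - by rewrite cD.
  - exact: tc.
exfalso.
apply: (exch_contra esym msk cV cnr tV (k := k) erefl _ uV _ _ _ _).
- rewrite dc; lia.
- by rewrite Hadj_sym.
- rewrite /desc dc; apply/negP => /andP [hh _]; move: hh; lia.
- by rewrite two_edge_sym.
- by rewrite pc.
Qed.
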